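(* For all integers $n\ge 1$ and $r\ge 1$, $$\sum_{k=1}^n {(-1)^k\over k^r}{n\choose k}{n+k\choose k}=-\sum_{d=1}^r 2^d\sum_{\substack{{\bf s}=(s_1,\dots,s_d)\\ |{\bf s}|=r}} H_n(s_1,s_2,\dots,s_d),$$ where the inner sum runs over all vectors ${\bf s}=(s_1,\dots,s_d)$ of positive integers with $s_1+\cdots+s_d=r$.
   Context: For a vector ${\bf s}=(s_1,\dots,s_d)$ of positive integers, $|{\bf s}|=\sum_{i=1}^d s_i$, and the multiple harmonic sum is $H_n(s_1,\dots,s_d)=\sum_{1\le k_1<k_2<\cdots<k_d\le n}\frac{1}{k_1^{s_1}k_2^{s_2}\cdots k_d^{s_d}}$. *)

(* Defs.v *)
From mathcomp Require Import all_boot all_order all_algebra.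
Set Implicit Arguments. Unset Strict Implicit. Unset Printing Implicit Defensive.
Import Order.TTheory GRing.Theory Num.Theory.
Local Open Scope ring_scope.

(* Multiple harmonic sum H_n(s_1,...,s_d) over rationals:
   sum over 1 <= k_1 < k_2 < ... < k_d <= n of 1/(k_1^{s_1} ... k_d^{s_d}).
   Indices k_i range over 'I_n.+1 = {0,...,n}, restricted to k_i >= 1 and
   strictly increasing. *)
Definition incr_pos (n d : nat) (k : d.-tuple 'I_n.+1) : bool :=
  (0 < head 0%N (map val k))%N && sorted ltn (map val k).

Definition mhs (n d : nat) (s : d.-tuple nat) : rat :=
  \sum_(k : d.-tuple 'I_n.+1 | incr_pos k)
     \prod_(i < d) (((tnth k i : nat)%:R) ^+ (tnth s i))^-1.

Definition is_comp (r d : nat) (s : d.-tuple 'I_r.+1) : bool :=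
  all (fun x : 'I_r.+1 => (0 < x)%N) s && (\sum_(i < d) (tnth s i : nat) == r)%N.

(* Main.v *)
Require Import Defs.
From mathcomp Require Import all_boot all_order all_algebra zify.
From mathcomp.algebra_tactics Require Import ring lra.
Set Implicit Arguments. Unset Strict Implicit. Unset Printing Implicit Defensive.
Import Order.TTheory GRing.Theory Num.Theory.
Local Open Scope ring_scope.

Lemma natid1 n k :
  ('C(n.+1, k) * 'C(n.+1 + k, k) * n.+1 =
   'C(n.+1, k) * 'C(n.+1 + k, k) * k + 'C(n, k) * 'C(n + k, k) * n.+1
   + 'C(n, k) * 'C(n + k, k) * k)%N.
Proof.
case: (leqP k n.+1) => hk; last first.
  by rewrite (bin_small hk) (bin_small (ltnW hk)) !mul0n.
have h1 := mul_bin_down n.+1 k.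
have h2 := mul_bin_down (n.+1 + k) k.
rewrite /= addnK addSn /= in h1 h2.
rewrite addSn.
set a := 'C(n.+1, k) in h1 *; set b := 'C((n + k).+1, k) in h2 *.
set c := 'C(n, k) in h1 *; set d := 'C(n + k, k) in h2 *.
have e : (a * b * (n.+1 - k) = c * d * (n + k).+1)%N.
  rewrite -[RHS]mulnA [(d * _)%N]mulnC h2 mulnCA mulnA h1.
  by rewrite mulnC mulnA.
nia.
Qed.



Lemma natid2 n j :
  ('C(n.+1, j.+1) * 'C(n.+1 + j.+1, j.+1) + 'C(n, j.+1) * 'C(n + j.+1, j.+1) =
   2 * ('C(n, j.+1) * 'C(n.+1 + j.+1, j.+1)) + 2 * ('C(n, j) * 'C(n.+1 + j, j)))%N.
Proof.
have f1 : ((n + j).+1 * 'C(n + j, j) = j.+1 * 'C((n + j).+1, j.+1))%N.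
  exact: (mul_bin_diag (n + j).+1 j).
have f2 : (n.+1 * 'C(n, j) = j.+1 * ('C(n, j.+1) + 'C(n, j)))%N.
  exact: (mul_bin_diag n.+1 j).
have f3 : ((n + j).+1 * 'C(n + j, j) = n.+1 * 'C((n + j).+1, j))%N.
  by rewrite (mul_bin_down (n + j).+1 j); congr (_ * _)%N; lia.
rewrite !addSn !addnS binS binS.
set a := 'C(n, j.+1) in f2 *; set a' := 'C(n, j) in f2 *.
set b := 'C((n + j).+1, j.+1) in f1 *; set b' := 'C((n + j).+1, j) in f3 *.
set c := 'C(n + j, j) in f1 f3.
have e : (a' * b = (a + a') * b')%N.
  apply/eqP; rewrite -(eqn_pmul2l (ltn0Sn j)); apply/eqP.
  rewrite mulnCA -f1 f3 [LHS]mulnCA [LHS]mulnA f2; ring.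
nia.
Qed.

Fixpoint Gf (b m : nat) : rat :=
  match b with
  | 0 => (m == 0%N)%:R
  | b'.+1 => Gf b' m + 2 * \sum_(1 <= j < m.+1) ((b'.+1)%:R ^+ j)^-1 * Gf b' (m - j)
  end.

Lemma Gf_0 b : Gf b 0 = 1.
Proof. by elim: b => //= b ->; rewrite big_geq // mulr0 addr0. Qed.

Lemma Erec b m : 
  \sum_(1 <= j < m.+2) ((b.+1)%:R ^+ j)^-1 * Gf b (m.+1 - j) =
  ((b.+1)%:R)^-1 * (Gf b m + \sum_(1 <= j < m.+1) ((b.+1)%:R ^+ j)^-1 * Gf b (m - j)).
Proof.
rewrite big_ltn // big_add1 /= expr1 subn1 /= mulrDr; congr (_ + _).
rewrite mulr_sumr; apply: eq_bigr => j _; rewrite subSS exprS invfM mulrA //.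
Qed.

Lemma Grec b m :
  (b.+1)%:R * Gf b.+1 m.+1 - Gf b.+1 m = (b.+1)%:R * Gf b m.+1 + Gf b m.
Proof.
rewrite [Gf b.+1 m.+1]/= Erec [Gf b.+1 m]/=.
have c0 : (b.+1)%:R != 0 :> rat by rewrite pnatr_eq0.
set E := \sum_(1 <= j < m.+1) _.
rewrite mulrDr (mulrCA _ 2) (mulrA (b.+1)%:R) divff // mul1r; ring.
Qed.

Definition Q n m : rat :=
  \sum_(1 <= k < n.+1) ((-1) ^+ k / (k%:R ^+ m) * ('C(n, k))%:R * ('C(n + k, k))%:R).

Lemma Qext n m : Q n m =
  \sum_(1 <= k < n.+2) ((-1) ^+ k / (k%:R ^+ m) * ('C(n, k))%:R * ('C(n + k, k))%:R).
Proof. by rewrite /Q [in RHS]big_nat_recr //= bin_small // mulr0 mul0r addr0. Qed.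

Lemma Qrec n m :
  (n.+1)%:R * Q n.+1 m.+1 - Q n.+1 m = (n.+1)%:R * Q n m.+1 + Q n m.
Proof.
rewrite (Qext n) (Qext n) /Q !mulr_sumr -!sumrB -!big_split /=.
apply: eq_big_nat => k /andP [k1 _].
have H := congr1 (fun x => x%:R : rat) (natid1 n k).
rewrite /= !natrD !natrM in H.
have k0 : k%:R != 0 :> rat by rewrite pnatr_eq0 -lt0n.
apply/eqP; rewrite -subr_eq0; apply/eqP.
set A := ('C(n.+1, k))%:R : rat in H *; set B := ('C(n.+1 + k, k))%:R : rat in H *.
set C := ('C(n, k))%:R : rat in H *; set D := ('C(n + k, k))%:R : rat in H *.
transitivity ((-1) ^+ k / (k%:R ^+ m.+1) * (A * B * (n.+1)%:R -
   (A * B * k%:R + C * D * (n.+1)%:R + C * D * k%:R))).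
  by rewrite exprSr; field; rewrite k0 expf_neq0.
by rewrite -H subrr mulr0.
Qed.

Lemma telesc (f : nat -> rat) M :
  \sum_(1 <= k < M.+1) (-1) ^+ k * (f k + f k.-1) = (-1) ^+ M * f M - f 0%N.
Proof.
elim: M => [|M IH]; first by rewrite big_geq // expr0 mul1r subrr.
rewrite big_nat_recr //= IH exprS; ring.
Qed.

Lemma Q0rec n : Q n.+1 0 + Q n 0 = -2.
Proof.
rewrite (Qext n) /Q -big_split /=.
pose f k := (('C(n, k) * 'C(n.+1 + k, k))%N)%:R : rat.
transitivity (2 * \sum_(1 <= k < n.+2) (-1) ^+ k * (f k + f k.-1)).
  rewrite mulr_sumr; apply: eq_big_nat => k /andP [k1 _].
  case: k k1 => // j _.
  rewrite !expr0 !divr1 -!mulrA -mulrDr -!natrM -natrD natid2 natrD !natrM.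
  rewrite /f /=; ring.
rewrite telesc /f bin_small // mul0n mulr0 bin0 bin0 /=; ring.
Qed.

Lemma QG n m : (0 < m)%N -> Q n m = - Gf n m.
Proof.
elim: n m => [|n IHn] m hm.
  by rewrite /Q big_geq //=; case: m hm => // m _; rewrite oppr0.
have c0 : (n.+1)%:R != 0 :> rat by rewrite pnatr_eq0.
elim: m hm => [//|m IHm] _.
apply: (mulfI c0).
have A := Qrec n m; have G := Grec n m.
case: m IHm A G => [|m] IHm A G.
  have B := Q0rec n.
  rewrite IHn // !Gf_0 in A G.
  rewrite !mulrN in A *; lra.
rewrite IHm // (IHn m.+2) // (IHn m.+1) // in A.
rewrite !mulrN in A *; lra.
Qed.

Section Rc.
Variable T : finType.

Definition splt d (k : d.+1.-tuple T) : d.-tuple T * T :=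
  ([tuple of belast (thead k) (behead_tuple k)], last (thead k) (behead k)).

Lemma sum_rcons d (F : d.+1.-tuple T -> rat) :
  \sum_(k : d.+1.-tuple T) F k = \sum_(t : d.-tuple T) \sum_(x : T) F [tuple of rcons t x].
Proof.
rewrite pair_big /=.
rewrite (reindex (fun p : d.-tuple T * T => [tuple of rcons p.1 p.2])) //=.
exists (@splt d).
  move=> [t x] _; rewrite /splt; congr pair.
    apply: val_inj => /=. case: t => s hs /=; case: s hs => [|a s] hs //=.
    by rewrite belast_rcons.
  by case: t => s hs /=; case: s hs => [|a s] hs //=; rewrite last_rcons.
move=> k _; apply: val_inj => /=.
case: k / tupleP => x k /=. by rewrite -lastI.
Qed.
End Rc.

Section B.
Variables N R : nat.

Definition Mb (b d : nat) (t : seq nat) : rat :=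
  \sum_(k : d.-tuple 'I_N.+1)
    (if path ltn 0%N (map val k) && (last 0%N (map val k) < b)%N
     then \prod_(i < d) (((tnth k i : nat)%:R) ^+ (nth 0%N t i))^-1 else 0).

Lemma Mb0 b t : Mb b 0 t = (0 < b)%N%:R.
Proof.
rewrite /Mb (big_pred1 [tuple]) => [|k]; last by rewrite [k]tuple0; apply/esym/eqP.
by rewrite /= big_ord0; case: b.
Qed.

Lemma tnth_rcons_w d (k : d.-tuple 'I_N.+1) x (i : 'I_d) :
  tnth [tuple of rcons k x] (widen_ord (leqnSn d) i) = tnth k i.
Proof. by rewrite !(tnth_nth x) /= nth_rcons size_tuple ltn_ord. Qed.

Lemma tnth_rcons_m d (k : d.-tuple 'I_N.+1) x :
  tnth [tuple of rcons k x] ord_max = x.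
Proof. by rewrite (tnth_nth x) /= nth_rcons size_tuple ltnn eqxx. Qed.

Lemma Mb_rcons b d t x : size t = d ->
  Mb b d.+1 (rcons t x) =
  \sum_(k0 : 'I_N.+1) (if (k0 < b)%N then ((k0%:R ^+ x)^-1) * Mb k0 d t else 0).
Proof.
move=> st; rewrite /Mb sum_rcons.
transitivity (\sum_(k0 : 'I_N.+1) \sum_(k : d.-tuple 'I_N.+1)
   (if (k0 < b)%N then ((k0%:R ^+ x)^-1) *
     (if path ltn 0%N (map val k) && (last 0%N (map val k) < k0)%N
     then \prod_(i < d) (((tnth k i : nat)%:R) ^+ (nth 0%N t i))^-1 else 0) else 0 : rat)); last first.
  apply: eq_bigr => k0 _; case: ifP => _; first by rewrite mulr_sumr.
  by rewrite big1.
rewrite [RHS]exchange_big; apply: eq_bigr => k _; apply: eq_bigr => k0 _.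
rewrite /= map_rcons rcons_path last_rcons big_ord_recr /= tnth_rcons_m.
have -> : \prod_(i < d) (((tnth [tuple of rcons k k0] (widen_ord (leqnSn d) i) : nat)%:R)
     ^+ nth 0%N (rcons t x) (widen_ord (leqnSn d) i))^-1
   = \prod_(i < d) (((tnth k i : nat)%:R) ^+ (nth 0%N t i))^-1 :> rat.
  apply: eq_bigr => i _; rewrite tnth_rcons_w /= nth_rcons st ltn_ord //.
rewrite nth_rcons st ltnn eqxx.
set P := (path _ _ _ && _); case: P; case: (k0 < b)%N => /=; rewrite ?mulr0 ?mul0r //.
by rewrite mulrC.
Qed.


Lemma tnth_rcons_w' d (k : d.-tuple 'I_R.+1) x (i : 'I_d) :
  tnth [tuple of rcons k x] (widen_ord (leqnSn d) i) = tnth k i.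
Proof. by rewrite !(tnth_nth x) /= nth_rcons size_tuple ltn_ord. Qed.

Lemma tnth_rcons_m' d (k : d.-tuple 'I_R.+1) x :
  tnth [tuple of rcons k x] ord_max = x.
Proof. by rewrite (tnth_nth x) /= nth_rcons size_tuple ltnn eqxx. Qed.

Definition Cs (m d : nat) (s : d.-tuple 'I_R.+1) : bool :=
  all (fun x : 'I_R.+1 => (0 < x)%N) s && (\sum_(i < d) (tnth s i : nat) == m)%N.

Lemma Cs_le m d (s : d.-tuple 'I_R.+1) : Cs m s -> (d <= m)%N.
Proof.
move=> /andP[/all_tnthP h /eqP <-].
apply: (@leq_trans (\sum_(i < d) 1)%N); first by rewrite sum1_card card_ord.
by apply: leq_sum => i _; apply: h.
Qed.

Lemma Cs_rcons m d (s : d.-tuple 'I_R.+1) j :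
  Cs m [tuple of rcons s j] = [&& Cs (m - j) s, (0 < j)%N & (j <= m)%N].
Proof.
rewrite /Cs /= all_rcons big_ord_recr /= tnth_rcons_m'.
under eq_bigr => i _ do rewrite tnth_rcons_w'.
set S := (\sum_(i < d) _)%N.
case: (0 < j)%N; rewrite /= ?andbF //.
case: (all _ _); rewrite /= ?andbF //.
apply/idP/idP => [/eqP H | /andP [/eqP H1 H2]]; first (apply/andP; split; apply/eqP); lia.
Qed.

Definition Tb (b m : nat) : rat :=
  \sum_(0 <= d < R.+1) 2 ^+ d * \sum_(s : d.-tuple 'I_R.+1 | Cs m s) Mb b d (map val s).


Lemma Tb0 b : Tb b 0 = (0 < b)%N%:R.
Proof.
rewrite /Tb big_ltn // expr0 mul1r (big_pred1 [tuple]); last first.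
  by move=> k; rewrite [k]tuple0; transitivity true; [rewrite /Cs big_ord0 | apply/esym/eqP].
rewrite Mb0 big_nat big1 ?addr0 // => d /andP[d1 _].
by rewrite big_pred0 ?mulr0 // => s; apply/negbTE/negP => /Cs_le H; lia.
Qed.

Lemma Tb_rec b m : (0 < m)%N -> (m <= R)%N ->
  Tb b m = \sum_(k0 : 'I_N.+1 | (k0 < b)%N)
             \sum_(j : 'I_R.+1 | (0 < j <= m)%N) 2 * (k0%:R ^+ j)^-1 * Tb k0 (m - j).
Proof.
move=> m0 mR.
transitivity (\sum_(0<=d<R) \sum_(t : d.-tuple 'I_R.+1) \sum_(j : 'I_R.+1)
   \sum_(k0 : 'I_N.+1) (if [&& Cs (m - j) t, (0 < j)%N, (j <= m)%N & (k0 < b)%N]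
      then 2 ^+ d.+1 * (k0%:R ^+ j)^-1 * Mb k0 d (map val t) else 0)).
  rewrite /Tb big_ltn // [X in 2 ^+ 0 * X]big_pred0 => [|s]; last by rewrite /Cs big_ord0 /= andbC; case: m m0 mR.
  rewrite mulr0 add0r big_add1 /=.
  apply: eq_bigr => d _. rewrite big_mkcond /= sum_rcons mulr_sumr; apply: eq_bigr => t _.
  rewrite mulr_sumr; apply: eq_bigr => j _.
  rewrite Cs_rcons /= map_rcons Mb_rcons ?size_map ?size_tuple //.
  case: (Cs (m - j) t) (0 < j)%N (j <= m)%N => [] [] [] /=; try by rewrite mulr0 big1.
  rewrite mulr_sumr; apply: eq_bigr => k0 _; case: ifP; rewrite ?mulr0 ?mulrA //.
symmetry.
transitivity (\sum_(k0 : 'I_N.+1) \sum_(j : 'I_R.+1) \sum_(0<=d<R) \sum_(t : d.-tuple 'I_R.+1)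
   (if [&& Cs (m - j) t, (0 < j)%N, (j <= m)%N & (k0 < b)%N]
      then 2 ^+ d.+1 * (k0%:R ^+ j)^-1 * Mb k0 d (map val t) else 0)).
  rewrite big_mkcond; apply: eq_bigr => k0 _; case: ifP => hk; last first.
    by rewrite big1 // => j _; rewrite big1 // => d _; rewrite big1 // => t _; rewrite !andbF.
  rewrite big_mkcond; apply: eq_bigr => j _; case: ifP => hj; last first.
    rewrite big1 // => d _; rewrite big1 // => t _.
    by case: (0 < j)%N (j <= m)%N hj => [] [] //= _; rewrite andbF.
  case/andP: hj => j0 jm.
  rewrite /Tb big_nat_recr //= [X in _ + 2 ^+ R * X]big_pred0 => [|s]; last first.
    by apply/negbTE/negP => /Cs_le H; lia.
  rewrite mulr0 addr0 mulr_sumr; apply: eq_bigr => d _.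
  rewrite big_mkcond mulr_sumr mulr_sumr; apply: eq_bigr => t _.
  rewrite j0 jm !andbT; case: (Cs (m - j) t); rewrite ?mulr0 //.
  by rewrite exprS; rewrite -!mulrA; congr (_ * _); rewrite mulrCA.
under eq_bigr => k0 _ do rewrite exchange_big.
under eq_bigr => k0 _ do under eq_bigr => d _ do rewrite exchange_big.
rewrite exchange_big.
under eq_bigr => d _ do rewrite exchange_big.
by under eq_bigr => d _ do under eq_bigr => t _ do rewrite exchange_big.
Qed.


Lemma sum_j_conv m (F : nat -> rat) : (m <= R)%N ->
  \sum_(j : 'I_R.+1 | (0 < j <= m)%N) F j = \sum_(1 <= j < m.+1) F j.
Proof.
move=> mR; rewrite -(big_mkord (fun j => (0 < j <= m)%N)).
rewrite (@big_cat_nat _ _ _ m.+1) //=.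
rewrite [X in _ + X]big_nat_cond [X in _ + X]big_pred0; last first.
  by move=> i; apply/negbTE/negP => /andP[/andP [h1 h2] /andP [h3 h4]]; lia.
rewrite addr0 big_ltn_cond //= [LHS]big_nat_cond [RHS]big_nat_cond.
apply: eq_bigl => i; apply/idP/idP => /andP[/andP [h1 h2] h3]; rewrite ?h1 ?h2 //=; lia.
Qed.

Lemma sum_ord_ltS (F : 'I_N.+1 -> rat) b (hb : (b < N.+1)%N) :
  \sum_(k0 : 'I_N.+1 | (k0 < b.+1)%N) F k0 = \sum_(k0 : 'I_N.+1 | (k0 < b)%N) F k0 + F (Ordinal hb).
Proof.
rewrite (bigD1 (Ordinal hb)) //= addrC; congr (_ + _); apply: eq_bigl => k.
rewrite -(inj_eq val_inj) /=; apply/idP/idP => [/andP [h1 h2]| h]; first by move/eqP: h2; lia.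
by apply/andP; split; [lia | apply/eqP; lia].
Qed.

Lemma Tb_Gf b m : (b <= N)%N -> (m <= R)%N -> Tb b.+1 m = Gf b m.
Proof.
elim: b m => [|b IH] m hb hm.
  case: m hm => [|m] hm; first by rewrite Tb0.
  have hb' : (0 < N.+1)%N by [].
  rewrite Tb_rec // sum_ord_ltS big_pred0 // add0r /= big1 // => j /andP [j0 _].
  by rewrite expr0n; case: (nat_of_ord j) j0 => // ?; rewrite invr0 mulr0 mul0r.
case: m hm => [|m] hm; first by rewrite Tb0 Gf_0.
have hb' : (b.+1 < N.+1)%N by [].
rewrite Tb_rec // sum_ord_ltS -Tb_rec // IH; last 2 first. lia. by [].
rewrite [in RHS]/= mulr_sumr.
rewrite (sum_j_conv (fun j => 2 / (b.+1)%:R ^+ j * Tb b.+1 (m.+1 - j))) //.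
congr (_ + _); apply: eq_big_nat => j /andP [j0 jm]; rewrite IH; [by rewrite mulrA | lia | lia].
Qed.

End B.

Lemma mhs_Mb n d (t : d.-tuple nat) : (0 < d)%N -> mhs n t = Mb n n.+1 d t.
Proof.
move=> hd; rewrite /mhs /Mb big_mkcond; apply: eq_bigr => k _.
have -> : incr_pos k = path ltn 0%N (map val k) && (last 0%N (map val k) < n.+1)%N.
  case: d k t hd => // d k t _; case: k / tupleP => x k.
  by rewrite /incr_pos /= last_map ltn_ord andbT.
case: (_ && _) => //; apply: eq_bigr => i _; by rewrite (tnth_nth 0%N).
Qed.

Theorem theorem4p1 (n r : nat) (hn : (1 <= n)%N) (hr : (1 <= r)%N) :
  \sum_(1 <= k < n.+1) ((-1) ^+ k / (k%:R ^+ r) * ('C(n, k))%:R * ('C(n + k, k))%:R : rat)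
  = - \sum_(1 <= d < r.+1)
        (2 ^+ d * \sum_(s : d.-tuple 'I_r.+1 | is_comp s)
                      mhs n [tuple of map (fun x : 'I_r.+1 => (x : nat)) s]).
Proof.
rewrite -/(Q n r).
rewrite QG //.
rewrite -(@Tb_Gf n r n r) //.
apply/eqP; rewrite eqr_opp; apply/eqP.
rewrite /Tb big_ltn // [X in 2 ^+ 0 * X]big_pred0 => [|s]; last first.
  by rewrite /Cs big_ord0 eq_sym eqn0Ngt hr andbF.
rewrite mulr0 add0r.
apply: eq_big_nat => d /andP [d1 _].
apply: congr1.
apply: eq_big => [s|s _]; first by [].
by rewrite mhs_Mb.
Qed.
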